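(* Let $k\ge 1$ and $t\ge 2$. Let $\mathbf C$ be the set of all binary linear $t$-CIS $[tk,k]$ codes, and let the symmetric group $S_{tk}$ act on $\mathbf C$ by permuting coordinates. Let $\mathbf C_{sys}$ be the set of all $t$-CIS $[tk,k]$ codes having a generator matrix of the form $(I_k\mid A_1\mid\cdots\mid A_{t-1})$ with all $A_j\in GL(k,2)$. Let $C_1,\dots,C_s$ be representatives of the distinct $S_{tk}$-orbits on $\mathbf C$, each chosen in $\mathbf C_{sys}$. Then $$g_k^{\,t-1}=\sum_{i=1}^s\bigl|\mathrm{Orb}_{S_{tk}}(C_i)\cap\mathbf C_{sys}\bigr|,$$ where $g_k=|GL(k,2)|$ and $\mathrm{Orb}_{S_{tk}}(C_i)$ is the orbit of $C_i$.
   Context: A binary linear $[tk,k]$ code is $t$-CIS if its coordinate set can be partitioned into $t$ pairwise disjoint information sets, an information set being a set of $k$ coordinates whose columns in a generator matrix are linearly independent. $I_k$ is the $k\times k$ identity matrix. *)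

(* Defs.v *)
From HB Require Import structures.
From mathcomp Require Import all_boot all_order all_algebra all_fingroup.
Set Implicit Arguments. Unset Strict Implicit. Unset Printing Implicit Defensive.
Import GRing.Theory.
Local Open Scope ring_scope.

(* A binary linear code of length n is represented by its canonical
   row-space matrix C : 'M['F_2]_n, i.e. a matrix with <<C>> = C.
   Its codewords are the row vectors in the row space of C. *)

Section Codes.
Variables (t k : nat).
Local Notation n := (t * k)%N.

Lemma blk_proof (j : 'I_n) : (j %/ k < t)%N.
Proof.
case: k j => [|k'] j; first by case: j => m; rewrite muln0.
by rewrite ltn_divLR // ltn_ord.
Qed.

Lemma off_proof (j : 'I_n) : (j %% k < k)%N.
Proof.
case: k j => [|k'] j; first by case: j => m; rewrite muln0.
by rewrite ltn_pmod.
Qed.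

Definition blk (j : 'I_n) : 'I_t := Ordinal (blk_proof j).
Definition off (j : 'I_n) : 'I_k := Ordinal (off_proof j).

Definition permc (s : 'S_n) (C : 'M['F_2]_n) : 'M['F_2]_n :=
  (<< col_perm s C >>)%MS.

Definition colsel (I : {set 'I_n}) (C : 'M['F_2]_n) : 'M['F_2]_n :=
  \matrix_(i, j) (if j \in I then C i j else 0).

Definition info_set (C : 'M['F_2]_n) (I : {set 'I_n}) : bool :=
  (#|I| == k) && (\rank (colsel I C) == k).

Definition tCIS (C : 'M['F_2]_n) : bool :=
  [exists P : {ffun 'I_t -> {set 'I_n}},
    [&& [forall i, info_set C (P i)],
        [forall i, forall j, (i != j) ==> [disjoint P i & P j]]
      & \bigcup_(i < t) P i == [set: 'I_n]]].

Definition is_code (C : 'M['F_2]_n) : bool :=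
  (<< C >>%MS == C) && (\rank C == k).

Definition codes : {set 'M['F_2]_n} :=
  [set C | is_code C && tCIS C].

Definition sysgen (B : 'I_t -> 'M['F_2]_k) : 'M['F_2]_(k, n) :=
  \matrix_(i, j) B (blk j) i (off j).

Definition systematic (C : 'M['F_2]_n) : bool :=
  [exists B : {ffun 'I_t -> 'M['F_2]_k},
    [&& [forall j : 'I_t, (nat_of_ord j == 0%N) ==> (B j == 1%:M)],
        [forall j : 'I_t, B j \in unitmx]
      & (sysgen B == C)%MS]].

Definition codes_sys : {set 'M['F_2]_n} :=
  [set C in codes | systematic C].

Definition orbit_code (C : 'M['F_2]_n) : {set 'M['F_2]_n} :=
  [set permc s C | s in [set: 'S_n]].

End Codes.

Definition gk (k : nat) : nat := #|[set M : 'M['F_2]_k | M \in unitmx]|.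

(* Main.v *)
Require Import Defs.
From HB Require Import structures.
From mathcomp Require Import all_boot all_order all_algebra all_fingroup.
Set Implicit Arguments. Unset Strict Implicit. Unset Printing Implicit Defensive.
Import GRing.Theory.
Local Open Scope ring_scope.

Lemma permcM (t k : nat) (u s : 'S_(t * k)) (D : 'M['F_2]_(t * k)) :
  permc u (permc s D) = permc (u * s)%g D.
Proof.
rewrite /permc col_permM; apply: eq_genmx.
rewrite !col_permE; exact: eqmxMr _ (genmxE _).
Qed.

Lemma orbit_eq (t k : nat) (C D : 'M['F_2]_(t * k)) :
  C \in orbit_code D -> orbit_code C = orbit_code D.
Proof.
case/imsetP => s _ ->; apply/setP => X; apply/imsetP/imsetP.
  by case=> u _ ->; exists (u * s)%g; rewrite ?inE // permcM.
case=> v _ ->; exists (v * s^-1)%g; rewrite ?inE // permcM.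
by rewrite -mulgA mulVg mulg1.
Qed.

Lemma sum_orbits (k t : nat) (s : nat) (Crep : 'I_s -> 'M['F_2]_(t * k))
  (Hdist : forall i j, i != j -> orbit_code (Crep i) != orbit_code (Crep j))
  (Hcover : forall C, C \in codes t k -> exists i, C \in orbit_code (Crep i)) :
  (\sum_(i < s) #|orbit_code (Crep i) :&: codes_sys t k|)%N = #|codes_sys t k|.
Proof.
set S := codes_sys t k.
have E : forall i, #|orbit_code (Crep i) :&: S| =
   (\sum_(C in S) (C \in orbit_code (Crep i)))%N.
  move=> i; rewrite -sum1_card big_mkcond /= [RHS]big_mkcond /=.
  by apply: eq_bigr => C _; rewrite inE; case: (C \in S); case: (C \in _).
rewrite (eq_bigr _ (fun i _ => E i)) exchange_big /= -sum1_card.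
apply: eq_bigr => C HC.
have HCc : C \in codes t k by move: HC; rewrite inE => /andP[].
have [i0 Hi0] := Hcover C HCc.
rewrite (bigD1 i0) //= Hi0 big1 // => j Hj.
case HCj: (C \in orbit_code (Crep j)) => //.
have := Hdist j i0 Hj; rewrite -(orbit_eq HCj) -(orbit_eq Hi0) eqxx //.
Qed.

Lemma idx_proof (t k : nat) (i : 'I_t) (c : 'I_k) : (i * k + c < t * k)%N.
Proof.
have H1 : (i * k + c < i.+1 * k)%N by rewrite mulSn [(k + _)%N]addnC ltn_add2l.
apply: (leq_trans H1); apply: leq_mul => //; exact: ltn_ord.
Qed.

Definition idx (t k : nat) (i : 'I_t) (c : 'I_k) : 'I_(t * k) :=
  Ordinal (idx_proof i c).

Lemma blk_idx t k (i : 'I_t) (c : 'I_k) : blk (idx i c) = i.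
Proof.
apply: val_inj => /=; have hk : (0 < k)%N by case: c => m; case: k => //.
by rewrite divnMDl // divn_small // addn0.
Qed.

Lemma off_idx t k (i : 'I_t) (c : 'I_k) : off (idx i c) = c.
Proof.
by apply: val_inj => /=; rewrite modnMDl modn_small.
Qed.

Lemma idx_blk_off t k (j : 'I_(t * k)) : idx (blk j) (off j) = j.
Proof. by apply: val_inj => /=; rewrite -divn_eq. Qed.

Lemma colsub_sysgen t k (B : 'I_t -> 'M['F_2]_k) i :
  colsub (idx i) (sysgen B) = B i.
Proof. by apply/matrixP => r c; rewrite !mxE blk_idx off_idx. Qed.

Lemma mul_colsel1 t k m (I : {set 'I_(t * k)}) (A : 'M['F_2]_(m, t * k)) :
  A *m colsel I 1%:M = \matrix_(r, j) (if j \in I then A r j else 0).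
Proof.
apply/matrixP => r j; rewrite !mxE; case HjI: (j \in I).
  rewrite -[in RHS](mulmx1 A) mxE; apply: eq_bigr => l _; by rewrite mxE HjI.
by rewrite big1 // => l _; rewrite mxE HjI mulr0.
Qed.

Lemma colsel_mul t k (I : {set 'I_(t * k)}) (M : 'M['F_2]_(t * k)) :
  colsel I M = M *m colsel I 1%:M.
Proof. by rewrite mul_colsel1; apply/matrixP => r j; rewrite !mxE. Qed.

Lemma rank_colsub_le m n n' (g : 'I_n' -> 'I_n) (A : 'M['F_2]_(m, n)) :
  (\rank (colsub g A) <= \rank A)%N.
Proof. by rewrite -[in X in colsub _ X](mulmx1 A) -mulmx_colsub mxrankM_maxl. Qed.

Lemma rank_sysgen t k (B : 'I_t -> 'M['F_2]_k) i :
  B i \in unitmx -> \rank (sysgen B) = k.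
Proof.
move=> HB; apply/eqP; rewrite eqn_leq rank_leq_row /=.
rewrite -{1}(mxrank_unit HB) -(colsub_sysgen B i); exact: rank_colsub_le.
Qed.

Lemma rank_colsel t k (B : 'I_t -> 'M['F_2]_k) i :
  B i \in unitmx ->
  \rank (colsel [set j | blk j == i] (<< sysgen B >>)%MS) = k.
Proof.
move=> HB; rewrite colsel_mul (eqmxMr _ (genmxE _)) mul_colsel1.
apply/eqP; rewrite eqn_leq rank_leq_row /=.
rewrite -{1}(mxrank_unit HB).
have -> : B i = colsub (idx i) (\matrix_(r, j) (if j \in [set j | blk j == i]
   then sysgen B r j else 0)).
  by apply/matrixP => r c; rewrite !mxE inE blk_idx eqxx off_idx.
exact: (rank_colsub_le (idx i)).
Qed.

Lemma card_blk t k (i : 'I_t) : #|[set j : 'I_(t * k) | blk j == i]| = k.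
Proof.
have -> : [set j : 'I_(t * k) | blk j == i] = [set idx i c | c in [set: 'I_k]].
  apply/setP => j; rewrite inE; apply/eqP/imsetP.
    by move=> <-; exists (off j); rewrite ?inE // idx_blk_off.
  by case=> c _ ->; rewrite blk_idx.
rewrite card_imset ?cardsT ?card_ord // => c1 c2 E.
by rewrite -(off_idx i c1) E off_idx.
Qed.

Definition FB (t k : nat) : {set {ffun 'I_t -> 'M['F_2]_k}} :=
  [set B : {ffun 'I_t -> 'M['F_2]_k} | [forall j : 'I_t, (nat_of_ord j == 0%N) ==> (B j == 1%:M)] &&
           [forall j : 'I_t, B j \in unitmx]].

Definition phi (t k : nat) (B : {ffun 'I_t -> 'M['F_2]_k}) : 'M['F_2]_(t * k) :=
  (<< sysgen B >>)%MS.

Lemma codes_sys_img t k (ht : (0 < t)%N) : codes_sys t k = [set phi B | B in FB t k].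
Proof.
apply/setP => C; apply/idP/imsetP.
  rewrite !inE => /andP[/andP[/andP[/eqP HC _] _] /existsP[B /and3P[H0 H1 H2]]].
  exists B; first by rewrite inE H0 H1.
  by rewrite /phi -HC; apply: eq_genmx; apply: eqmx_sym; apply/eqmxP.
case=> B; rewrite inE => /andP[H0 H1] ->.
have HU : forall j, B j \in unitmx by move=> j; exact: (forallP H1 j).
rewrite !inE; apply/andP; split; last first.
  apply/existsP; exists B; rewrite H0 H1 /=.
  apply/eqmxP; exact: eqmx_sym (genmxE _).
apply/andP; split.
  rewrite /is_code /phi genmx_id eqxx /=.
  by rewrite genmxE (rank_sysgen (i := Ordinal ht)).
apply/existsP; exists [ffun i => [set j : 'I_(t * k) | blk j == i]].
apply/and3P; split.
- apply/forallP => i; rewrite /info_set ffunE card_blk eqxx /=.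
  by rewrite /phi (rank_colsel (HU i)).
- apply/forallP => i; apply/forallP => j; apply/implyP => Hij.
  rewrite !ffunE -setI_eq0; apply/eqP/setP => x; rewrite !inE.
  apply/negP => /andP[/eqP E1 /eqP E2].
  by rewrite -E1 -E2 eqxx in Hij.
- apply/eqP/setP => j; rewrite inE; apply/bigcupP; exists (blk j) => //.
  by rewrite ffunE inE.
Qed.

Lemma phi_inj t k (ht : (0 < t)%N) : {in FB t k &, injective (@phi t k)}.
Proof.
move=> B1 B2; rewrite !inE => /andP[H01 _] /andP[H02 _] E.
set i0 : 'I_t := Ordinal ht.
have HX : (sysgen B1 <= sysgen B2)%MS by move: E; rewrite /phi => /genmxP/andP[].
case/submxP: HX => D HD.
have e1 : B1 i0 = 1%:M by apply/eqP; exact: (implyP (forallP H01 i0)).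
have e2 : B2 i0 = 1%:M by apply/eqP; exact: (implyP (forallP H02 i0)).
have HD1 : D = 1%:M.
  have := congr1 (colsub (idx i0)) HD.
  by rewrite -mulmx_colsub !colsub_sysgen e1 e2 mulmx1.
apply/ffunP => j.
by rewrite -(colsub_sysgen B1) -(colsub_sysgen B2) HD HD1 mul1mx.
Qed.

Lemma card_FB t k (ht : (0 < t)%N) : #|FB t k| = (gk k ^ (t - 1))%N.
Proof.
case: t ht => [//|t'] _.
pose F := fun j : 'I_t'.+1 => if nat_of_ord j == 0%N then pred1 (1%:M : 'M['F_2]_k)
                           else [pred M : 'M['F_2]_k | M \in unitmx].
have -> : #|FB t'.+1 k| = #|family F|.
  apply: eq_card => B; rewrite inE; apply/andP/familyP.
    case=> H0 H1 j; rewrite /F; case: ifP => Hj /=.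
      exact: (implyP (forallP H0 j) Hj).
    exact: (forallP H1 j).
  move=> H; split; apply/forallP => j; have := H j; rewrite /F.
    by case: ifP => //= Hj ->.
  by case: ifP => //= _ /eqP ->; rewrite unitmx1.
rewrite card_family foldrE big_map big_enum /=.
rewrite big_ord_recl /F /= card1 mul1n subn1 /=.
rewrite (eq_bigr (fun _ => gk k)) ?prod_nat_const ?card_ord //.
move=> i _ /=; rewrite /gk; apply: eq_card => M; by rewrite inE.
Qed.

Theorem proposition7 (k t : nat) (hk : (1 <= k)%N) (ht : (2 <= t)%N)
  (s : nat) (Crep : 'I_s -> 'M['F_2]_(t * k))
  (Hsys : forall i, Crep i \in codes_sys t k)
  (Hdist : forall i j, i != j -> orbit_code (Crep i) != orbit_code (Crep j))
  (Hcover : forall C, C \in codes t k -> exists i, C \in orbit_code (Crep i)) :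
  (gk k ^ (t - 1))%N = (\sum_(i < s) #|orbit_code (Crep i) :&: codes_sys t k|)%N.
Proof.
have ht0 : (0 < t)%N by apply: leq_trans ht.
rewrite sum_orbits // (@codes_sys_img t k ht0) card_in_imset ?card_FB //.
exact: phi_inj.
Qed.
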